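(* The expected numbers $E^S_n$ of napkinless diners under algorithm $S$ satisfy $E^S_1=E^S_2=0$, $E^S_3=1/2$, $E^S_4=3/4$, and, for all $n\ge 5$, \[ E^S_n=\frac12\left(E^S_{n-1}+E^S_{\lfloor\frac{n+1}{2}\rfloor}+E^S_{\lceil\frac{n+1}{2}\rceil}\right). \]
   Context: Seating model. A circular table has $n\ge 1$ seats, with exactly one napkin between each pair of adjacent seats ($n$ napkins in total). ''Left'' and ''right'' are from the perspective of a seated diner. Diners $1,\dots,n$ arrive in this order and a maitre d' chooses a seat for each. A preference order is $\sigma=(\sigma_1,\dots,\sigma_n)\in\{-1,1\}^n$, where $\sigma_j=+1$ means diner $j$ prefers the napkin on their right and $\sigma_j=-1$ the napkin on their left. When diner $j$ is seated, they take their preferred adjacent napkin if it is still on the table; otherwise the other adjacent napkin if still on the table; otherwise they are napkinless. Label the seats $1,\dots,n$ so that seat $1$ is the seat of diner $1$ and seats $2,3,\dots,n$ follow successively to the right of seat $1$. The ''previous diner'' means the most recently seated diner. Algorithm $S$ (napkin shunning). Seat diner 1 in seat 1. Then repeat: (S1) If all seats are filled, stop. If the seat adjacent to the previous diner on the side opposite to that diner's preference is empty, go to S2; otherwise go to S3. (S2) Seat the next diner in that seat; return to S1. (S3) A gap is a maximal block of consecutive empty seats (these are intervals of seat labels within $2,\dots,n$); take the gap containing the smallest-labelled empty seat, let $i$ be its number of seats, and seat the next diner in the $\lceil i/2\rceil$-th seat of this gap counting from its smallest-labelled seat (which counts as the 1st); return to S1. $\nu_S(\sigma)$ is the number of napkinless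 diners when the $n$ diners with preference order $\sigma$ are seated at the circular table with $n$ seats by algorithm $S$, and $E^S_n=2^{-n}\sum_{\sigma\in\{-1,1\}^n}\nu_S(\sigma)$. *)

(* Defs.v *)
From mathcomp Require Import all_boot all_order all_algebra.
Set Implicit Arguments. Unset Strict Implicit. Unset Printing Implicit Defensive.
Import GRing.Theory Num.Theory.

(* Conventions:
   - seats are labelled 1..n; seat (rightS n k) is the seat to the right of k,
     (leftS n k) the seat to the left (cyclically).
   - napkin k (1 <= k <= n) is the napkin between seat k and seat rightS n k;
     so the right napkin of seat k is napkin k, its left napkin is napkin
     (leftS n k).
   - a preference is a bool: true = +1 (prefers right napkin),
     false = -1 (prefers left napkin). *)

Definition rightS (n k : nat) : nat := if k == n then 1 else k.+1.
Definition leftS (n k : nat) : nat := if k == 1 then n else k.-1.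

Definition upd (f : nat -> bool) (k : nat) : nat -> bool :=
  fun x => if x == k then true else f x.

Definition take_napkin (n : nat) (taken : nat -> bool) (s : nat) (b : bool)
  : (nat -> bool) * nat :=
  let pref := if b then s else leftS n s in
  let other := if b then leftS n s else s in
  if ~~ taken pref then (upd taken pref, 0)
  else if ~~ taken other then (upd taken other, 0)
  else (taken, 1).

(* Step S1/S2/S3: choose the seat of the next diner, given the occupied
   seats [occ], the seat p of the previous diner and its preference bp. *)
Definition nextS (n : nat) (occ : nat -> bool) (p : nat) (bp : bool) : nat :=
  let t := if bp then leftS n p else rightS n p in
  if ~~ occ t then t
  else
    (* smallest-labelled empty seat m among 2..n *)
    let m := 2 + find (fun k => ~~ occ k) (iota 2 (n - 1)) in
    (* i = size of the gap (maximal block of empty seats) starting at m *)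
    let i := find occ (iota m (n - m + 1)) in
    m + uphalf i - 1.

Fixpoint runS (n : nat) (prefs : seq bool) (occ taken : nat -> bool)
  (p : nat) (bp : bool) : nat :=
  match prefs with
  | [::] => 0
  | b :: rest =>
      let s := nextS n occ p bp in
      let tm := take_napkin n taken s b in
      tm.2 + runS n rest (upd occ s) tm.1 s b
  end.

Definition nuS (n : nat) (sigma : seq bool) : nat :=
  match sigma with
  | [::] => 0
  | b1 :: rest =>
      let tm := take_napkin n (fun _ => false) 1 b1 in
      tm.2 + runS n rest (upd (fun _ => false) 1) tm.1 1 b1
  end.

Definition ES (n : nat) : rat :=
  (\sum_(sigma : n.-tuple bool) (nuS n sigma)%:R) / (2 ^ n)%:R.

(* Main.v *)
Require Import Defs.
From mathcomp Require Import all_boot all_order all_algebra.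
From mathcomp Require Import zify ring.
Import GRing.Theory Num.Theory.
Local Open Scope ring_scope.
Fixpoint avg (k : nat) (F : seq bool -> rat) : rat :=
  match k with
  | 0 => F [::]
  | k'.+1 => (avg k' (fun t => F (true :: t)) + avg k' (fun t => F (false :: t))) / 2
  end.

Lemma sum_tuple_avg k (F : seq bool -> rat) :
  \sum_(t : k.-tuple bool) F t = (2 ^ k)%:R * avg k F.
Proof.
elim: k F => [|k IH] F.
  rewrite (big_pred1 [tuple]) /=; first by rewrite mul1r.
  by move=> t; rewrite /= (tuple0 t); apply/esym/eqP.
have -> : \sum_(t : k.+1.-tuple bool) F t =
   \sum_(p : bool * k.-tuple bool) F (p.1 :: p.2).
  rewrite (reindex (fun p : bool * k.-tuple bool => [tuple of p.1 :: p.2])) //=.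
  exists (fun t : k.+1.-tuple bool => (thead t, [tuple of behead t])).
    by move=> [b t] _ /=; congr pair; apply: val_inj.
  move=> t _; apply: val_inj => /=.
  by case: t => [[|x s] //= _]. 
rewrite -(pair_big xpredT xpredT (fun b (t : k.-tuple bool) => F (b :: t))) /=.
rewrite big_bool /= (IH (fun t => F (true :: t))) (IH (fun t => F (false :: t))).
rewrite /= expnS natrM; by field.
Qed.

Lemma avg_addc k (c : rat) F : avg k (fun t => c + F t) = c + avg k F.
Proof.
elim: k c F => [|k IH] c F //=.
rewrite (IH c (fun t => F (true :: t))) (IH c (fun t => F (false :: t))); by field.
Qed.
Definition Gof (c : nat -> rat) (g : nat) : rat :=
  if g == 0%N then 0 else if (g <= 2)%N then 1 else c (g.+1)./2 + c (uphalf g.+1).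

Fixpoint Cf (f k : nat) : rat :=
  match f with
  | 0 => 0
  | f'.+1 => match k with 0 => 0 | k'.+1 => (Cf f' k' + Gof (Cf f') k') / 2 end
  end.

Lemma Cf_fuel f1 f2 k : (k < f1)%N -> (k < f2)%N -> Cf f1 k = Cf f2 k.
Proof.
elim: f1 f2 k => [|f1 IH] [|f2] [|k] //= h1 h2.
rewrite (IH f2 k) //; congr ((_ + _) / 2).
rewrite /Gof; case: (k =P 0%N) => // k0; case: ifP => // k2.
rewrite (IH f2) ?(IH f2 (uphalf k.+1)) //; try lia.
Qed.

Definition C k := Cf k.+1 k.
Definition Gv := Gof C.

Lemma C0 : C 0 = 0. Proof. by []. Qed.

Lemma C_rec k : C k.+1 = (C k + Gv k) / 2.
Proof.
have -> : C k.+1 = (C k + Gof (Cf k.+1) k) / 2 by [].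
congr ((_ + _) / 2); rewrite /Gv /Gof.
case: (k =P 0%N) => // k0; case: ifP => // k2.
rewrite /C (Cf_fuel k.+1 (k.+1)./2.+1) ?(Cf_fuel k.+1 (uphalf k.+1).+1) //; lia.
Qed.

Fixpoint T k : rat := match k with 0 => 0 | k'.+1 => if k' == 0%N then 1 else (T k' + Gv k') / 2 end.

Lemma Gv_rec g : (3 <= g)%N ->
  Gv g = ((C (uphalf g).-1 + Gv (g - uphalf g)) + (C (g - uphalf g) + Gv (uphalf g).-1)) / 2.
Proof.
move=> g3; rewrite {1}/Gv /Gof.
have -> : (g == 0%N) = false by lia.
have -> : (g <= 2)%N = false by lia.
have -> : (g.+1)./2 = ((uphalf g).-1).+1 by lia.
have -> : uphalf g.+1 = (g - uphalf g).+1 by lia.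
rewrite !C_rec -/Gv; by field.
Qed.
Local Close Scope ring_scope.
Ltac clean := repeat match goal with
  | H : ?T |- _ => lazymatch T with
       | is_true (leq _ _) => fail
       | is_true (andb _ _) => fail
       | is_true (negb (_ == _)) => fail
       | @eq _ _ _ => fail
       | (_ <> _) => fail
       | (_ \/ _) => fail
       | (_ /\ _) => fail
       | nat => fail
       | _ => clear H
     end
  end.
Ltac slia := clean; lia.
Set Implicit Arguments. Unset Strict Implicit. Unset Printing Implicit Defensive.

Definition inI (x : nat) (a : nat * nat) := (a.1 <= x <= a.2)%N.
Definition wf n (a : nat * nat) := (2 <= a.1)%N && (a.1 <= a.2)%N && (a.2 <= n)%N.
Definition sep (a b : nat * nat) := (a.2.+1 < b.1)%N.
Definition gapok (tk : nat -> bool) (a : nat * nat) : Prop :=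
  [/\ tk a.1.-1, tk a.2 & forall j, (a.1 <= j < a.2)%N -> tk j = false].

Lemma sep_split xs a ys : pairwise sep (xs ++ a :: ys) ->
  [/\ all (fun b => b.2.+1 < a.1)%N xs, all (fun b => a.2.+1 < b.1)%N ys,
      pairwise sep xs, pairwise sep ys & allrel sep xs ys].
Proof.
rewrite pairwise_cat allrel_consr /= => /and4P [/andP [h1 h2] h3 h4 h5].
by split.
Qed.

Lemma replace_ok n occ (tk tk' : nat -> bool) xs ys l r s mid :
  all (wf n) (xs ++ (l,r) :: ys) -> pairwise sep (xs ++ (l,r) :: ys) ->
  (forall x, (1 <= x <= n)%N -> occ x = ~~ has (inI x) (xs ++ (l,r) :: ys)) ->
  (forall a, a \in xs ++ ys -> gapok tk a) ->
  (l <= s <= r)%N ->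
  (forall j, tk j -> tk' j) -> (forall j, tk' j -> [|| tk j, j == s | j == s.-1]) ->
  (forall x, has (inI x) mid = (l <= x <= r)%N && (x != s)) ->
  all (fun a => (l <= a.1)%N && (a.1 <= a.2)%N && (a.2 <= r)%N) mid ->
  pairwise sep mid ->
  [/\ all (wf n) (xs ++ mid ++ ys), pairwise sep (xs ++ mid ++ ys),
      (forall x, (1 <= x <= n)%N -> upd occ s x = ~~ has (inI x) (xs ++ mid ++ ys)) &
      (forall a, a \in xs ++ ys -> gapok tk' a)].
Proof.
move=> Hwf Hp Hocc Hg Hs Hmono Hnew Hmid Hsub Hpm.
have [Hxs Hys Hpx Hpy Hxy] := sep_split Hp.
move: Hwf; rewrite all_cat /= => /and3P [Wx Wlr Wy].
have nxs : forall x, (l <= x.+1)%N -> has (inI x) xs = false.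
  move=> x hx; apply/hasP => [[b hb]]; move/allP: Hxs => /(_ b hb) /=.
  by rewrite /inI /=; slia.
have nys : forall x, (x <= r.+1)%N -> has (inI x) ys = false.
  move=> x hx; apply/hasP => [[b hb]]; move/allP: Hys => /(_ b hb) /=.
  by rewrite /inI /=; slia.
split.
- rewrite !all_cat Wx Wy /= andbT; apply/allP => a ha.
  move/allP: Hsub => /(_ a ha) /=; move: Wlr; rewrite /wf /=; slia.
- rewrite !pairwise_cat allrel_catr Hpx Hpy Hpm Hxy !andbT /=.
  apply/andP; split; apply/allrelP => b a hb ha.
  + move/allP: Hxs => /(_ b hb) /=; move/allP: Hsub => /(_ a ha) /=; rewrite /sep; slia.
  + move/allP: Hsub => /(_ b hb) /=; move/allP: Hys => /(_ a ha) /=; rewrite /sep; slia.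
- move=> x hx; rewrite /upd Hocc // !has_cat /= Hmid.
  case: eqP => [->|xs_].
    by rewrite nxs ?nys //; slia.
  by rewrite /inI /= andbT.
- move=> a ha; have [g1 g2 g3] := Hg a ha.
  have far : (a.2.+1 < l)%N \/ (r.+1 < a.1)%N.
    move: ha; rewrite mem_cat => /orP [ha|ha].
      by left; move/allP: Hxs => /(_ a ha) /=.
    by right; move/allP: Hys => /(_ a ha) /=.
  split; try by apply: Hmono.
  move=> j hj; apply/negbTE/negP => /Hnew.
  rewrite g3 //= => /orP [] /eqP; slia.
Qed.

Lemma find_iota (P : pred nat) a m j :
  (forall i, (i < j)%N -> ~~ P (a + i)%N) -> ((j < m)%N -> P (a + j)%N) -> (j <= m)%N ->
  find P (iota a m) = j.
Proof.
elim: j a m => [|j IH] a m h1 h2 h3.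
  case: m h2 h3 => [|m] //= h2 _; by rewrite -(addn0 a) h2.
case: m h2 h3 => [|m] // h2 h3 /=.
have -> : P a = false by apply/negbTE; rewrite -(addn0 a) h1.
congr S; apply: IH.
- move=> i hi; rewrite addSnnS; exact: h1.
- move=> hj; rewrite addSnnS; exact: h2.
- exact: h3.
Qed.

Lemma upd_mono (f : nat -> bool) k x : f x -> upd f k x.
Proof. by rewrite /upd; case: eqP. Qed.

Lemma upd_new (f : nat -> bool) k x : upd f k x -> [|| f x, x == k | x == k.-1].
Proof. by rewrite /upd; case: eqP => [->|_] H; [rewrite !(orbT, orTb) | rewrite H]. Qed.

Lemma upd_new1 (f : nat -> bool) k x : upd f k x -> [|| f x, x == k.+1 | x == k].
Proof. by rewrite /upd; case: eqP => [->|_] H; [rewrite !(orbT, orTb) | rewrite H]. Qed.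

Lemma updE (f : nat -> bool) k x : upd f k x = (x == k) || f x.
Proof. by rewrite /upd; case: eqP. Qed.

Lemma nextS_S2 n occ p bp t : t = (if bp then leftS n p else rightS n p) -> occ t = false ->
  nextS n occ p bp = t.
Proof. by move=> Ht Ho; rewrite /nextS -Ht Ho. Qed.

Lemma notin_1 n I : all (wf n) I -> has (inI 1) I = false.
Proof.
move=> /allP H; apply/negbTE/hasP => [[a ha]]; move: (H a ha); rewrite /wf /inI; slia.
Qed.

Lemma notin_lr n xs l r ys x : all (wf n) (xs ++ (l,r) :: ys) -> pairwise sep (xs ++ (l,r) :: ys) ->
  (x == l.-1) || (x == r.+1) -> has (inI x) (xs ++ (l,r) :: ys) = false.
Proof.
move=> Hw Hp hx; have [Hxs Hys _ _ _] := sep_split Hp.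
move: Hw; rewrite all_cat /= => /and3P [_ Wlr _].
rewrite has_cat /=; apply/negbTE; rewrite !negb_or; apply/and3P; split.
- apply/hasP => [[b hb]]; move/allP: Hxs => /(_ b hb) /=; rewrite /inI; move: Wlr hx; rewrite /wf /=.
  move=> ? /orP [] /eqP; slia.
- move: Wlr hx; rewrite /wf /inI /= => ? /orP [] /eqP; slia.
- apply/hasP => [[b hb]]; move/allP: Hys => /(_ b hb) /=; rewrite /inI; move: Wlr hx; rewrite /wf /=.
  move=> ? /orP [] /eqP; slia.
Qed.

Lemma S3_find n occ l r gs :
  all (wf n) ((l,r) :: gs) -> pairwise sep ((l,r) :: gs) ->
  (forall x, (1 <= x <= n)%N -> occ x = ~~ has (inI x) ((l,r) :: gs)) ->
  (2 + find (fun k => ~~ occ k) (iota 2 (n - 1)))%N = l /\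
  find occ (iota l (n - l + 1)) = (r.+1 - l)%N.
Proof.
move=> Hw Hp Ho.
have [_ Hys _ _ _] := sep_split (xs := [::]) Hp.
move: Hw => /= /andP [Wlr Wgs]; move: (Wlr); rewrite /wf /= => Wlr'.
have ngs : forall x, (x <= r.+1)%N -> has (inI x) gs = false.
  move=> x hx; apply/negbTE/hasP => [[b hb]]; move/allP: Hys => /(_ b hb) /=; rewrite /inI; slia.
split.
  suff -> : find (fun k => ~~ occ k) (iota 2 (n - 1)) = (l - 2)%N by slia.
  apply: find_iota.
  - move=> i hi; rewrite Ho /= ?ngs ?negbK /inI /=; slia.
  - move=> hi; rewrite Ho /= ?ngs /inI /=; slia.
  - slia.
apply: find_iota.
- move=> i hi; rewrite Ho /= /inI /=; slia.
- move=> hi; rewrite Ho /= ?ngs /inI /=; slia.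
- slia.
Qed.

Inductive desc :=
  | NoChain of seq (nat * nat)
  | Chain of seq (nat * nat) & nat & nat & bool & bool & seq (nat * nat).

Definition ivs D := match D with NoChain gs => gs | Chain xs l r _ _ ys => xs ++ (l, r) :: ys end.
Definition gapsof D := match D with NoChain gs => gs | Chain xs _ _ _ _ ys => xs ++ ys end.

Definition linkok n (occ tk : nat -> bool) p bp D : Prop :=
  match D with
  | NoChain _ => occ (if bp then leftS n p else rightS n p)
  | Chain _ l r up nf _ =>
     (forall j, (l <= j < r)%N -> tk j = false) /\
     if up then [/\ bp = false, p = l.-1, tk l.-1 = ~~ nf & tk r]
     else [/\ bp = true, p = (if r == n then 1%N else r.+1), tk r = ~~ nf & tk l.-1]
  end.

Definition Good n occ tk p bp D : Prop :=
  [/\ all (wf n) (ivs D), pairwise sep (ivs D),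
      (forall x, (1 <= x <= n)%N -> occ x = ~~ has (inI x) (ivs D)),
      (forall a, a \in gapsof D -> gapok tk a) & linkok n occ tk p bp D].

Definition len (a : nat * nat) := (a.2.+1 - a.1)%N.
Definition sz D := (\sum_(a <- ivs D) len a)%N.
Local Open Scope ring_scope.
Definition val D : rat := \sum_(a <- gapsof D) Gv (len a) +
  match D with NoChain _ => 0 | Chain _ l r _ nf _ => if nf then C (r.+1 - l) else T (r.+1 - l) end.
Local Close Scope ring_scope.

Definition midok l r s mid :=
  [/\ forall x, has (inI x) mid = (l <= x <= r)%N && (x != s),
      all (fun a => (l <= a.1)%N && (a.1 <= a.2)%N && (a.2 <= r)%N) mid,
      pairwise sep mid & (\sum_(a <- mid) len a).+1 = (r.+1 - l)%N].

Lemma mid0 l : midok l l l [::].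
Proof.
split => //=; last by rewrite big_nil; slia.
move=> x; rewrite /inI; case: eqP => [->|]; rewrite ?leqnn //; slia.
Qed.

Lemma midR l r : (l < r)%N -> midok l r r [:: (l, r.-1)].
Proof.
move=> h; split => /=.
- move=> x; rewrite /inI /= orbF; case: eqP => [->|]; slia.
- rewrite andbT; slia.
- by [].
- rewrite big_cons big_nil /len /=; slia.
Qed.

Lemma midL l r : (l < r)%N -> midok l r l [:: (l.+1, r)].
Proof.
move=> h; split => /=.
- move=> x; rewrite /inI /= orbF; case: eqP => [->|]; slia.
- rewrite andbT; slia.
- by [].
- rewrite big_cons big_nil /len /=; slia.
Qed.

Lemma midS l r s : (l < s < r)%N -> midok l r s [:: (l, s.-1); (s.+1, r)].
Proof.
move=> h; split => /=.
- move=> x; rewrite /inI /= orbF; case: eqP => [->|]; slia.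
- rewrite andbT; slia.
- rewrite /sep /= andbT; slia.
- rewrite !big_cons big_nil /len /=; slia.
Qed.

Lemma good_replace n occ (tk tk' : nat -> bool) p' b' xs ys l r s mid D' :
  all (wf n) (xs ++ (l,r) :: ys) -> pairwise sep (xs ++ (l,r) :: ys) ->
  (forall x, (1 <= x <= n)%N -> occ x = ~~ has (inI x) (xs ++ (l,r) :: ys)) ->
  (forall a, a \in xs ++ ys -> gapok tk a) ->
  (l <= s <= r)%N ->
  (forall j, tk j -> tk' j) -> (forall j, tk' j -> [|| tk j, j == s | j == s.-1]) ->
  midok l r s mid ->
  ivs D' = xs ++ mid ++ ys ->
  (forall a, a \in gapsof D' -> a \in xs ++ ys \/ gapok tk' a) ->
  linkok n (upd occ s) tk' p' b' D' ->
  Good n (upd occ s) tk' p' b' D'.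
Proof.
move=> Hw Hp Ho Hg Hs Hm Hn [M1 M2 M3 _] Hiv Hgs Hl.
have [R1 R2 R3 R4] := replace_ok Hw Hp Ho Hg Hs Hm Hn M1 M2 M3.
split; rewrite ?Hiv //.
by move=> a /Hgs [/R4|].
Qed.

Lemma sz_replace D D' xs ys l r s mid k :
  ivs D = xs ++ (l,r) :: ys -> ivs D' = xs ++ mid ++ ys -> midok l r s mid ->
  sz D = k.+1 -> sz D' = k.
Proof.
move=> H1 H2 [_ _ _ H]; rewrite /sz H1 H2 !big_cat big_cons /=.
have -> : len (l, r) = (r.+1 - l)%N by [].
by rewrite -H addSn addnS => -[].
Qed.

Lemma tnE n tk s b : (2 <= s)%N -> take_napkin n tk s b =
  let pr := if b then s else s.-1 in let ot := if b then s.-1 else s in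
  if ~~ tk pr then (upd tk pr, 0%N) else if ~~ tk ot then (upd tk ot, 0%N) else (tk, 1%N).
Proof.
move=> h; rewrite /take_napkin /leftS.
have -> : (s == 1%N) = false by slia.
by [].
Qed.

Local Open Scope ring_scope.
Definition StepOK n occ tk p bp D k : Prop :=
  exists D1 D0, let s := nextS n occ p bp in
   [/\ Good n (upd occ s) (take_napkin n tk s true).1 s true D1, sz D1 = k,
       Good n (upd occ s) (take_napkin n tk s false).1 s false D0, sz D0 = k &
       val D = (((take_napkin n tk s true).2)%:R + val D1 +
                (((take_napkin n tk s false).2)%:R + val D0)) / 2].
Local Close Scope ring_scope.

Lemma occ_in n occ I x :
  (forall x, (1 <= x <= n)%N -> occ x = ~~ has (inI x) I) -> (1 <= x <= n)%N ->
  has (inI x) I -> occ x = false.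
Proof. by move=> Ho hx hI; rewrite Ho // hI. Qed.

Lemma Wlr n xs l r ys : all (wf n) (xs ++ (l,r) :: ys) -> (2 <= l)%N /\ (l <= r)%N /\ (r <= n)%N.
Proof.
move/allP => H; have := H (l,r); rewrite mem_cat in_cons eqxx orbT /wf /= => /(_ isT); slia.
Qed.

Lemma occ_rS n occ xs l r ys :
  all (wf n) (xs ++ (l,r) :: ys) -> pairwise sep (xs ++ (l,r) :: ys) ->
  (forall x, (1 <= x <= n)%N -> occ x = ~~ has (inI x) (xs ++ (l,r) :: ys)) ->
  occ (rightS n r) /\ occ (if r == n then 1%N else r.+1).
Proof.
move=> Hw Hp Ho.
have [W1 [W2 W3]] := Wlr Hw.
rewrite /rightS; case: eqP => [rn|rn]; rewrite !Ho ?(notin_1 Hw) ?(notin_lr Hw Hp) ?(eqxx r.+1) ?orbT //; slia.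
Qed.

Lemma occ_lS n occ xs l r ys :
  all (wf n) (xs ++ (l,r) :: ys) -> pairwise sep (xs ++ (l,r) :: ys) ->
  (forall x, (1 <= x <= n)%N -> occ x = ~~ has (inI x) (xs ++ (l,r) :: ys)) ->
  occ (leftS n l) /\ occ l.-1.
Proof.
move=> Hw Hp Ho.
have [W1 [W2 W3]] := Wlr Hw.
have -> : leftS n l = l.-1 by rewrite /leftS; case: eqP => //; slia.
rewrite Ho ?(notin_lr Hw Hp) ?eqxx //; slia.
Qed.

Lemma has_lr x xs l r ys : (l <= x <= r)%N -> has (inI x) (xs ++ (l,r) :: ys).
Proof. by move=> h; rewrite has_cat /= /inI /= h orbT. Qed.

Lemma upd_newP (f : nat -> bool) s k x : (k == s) || (k == s.-1) -> upd f k x -> [|| f x, x == s | x == s.-1].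
Proof.
move=> hk; rewrite updE => /orP [/eqP ->|H]; last by rewrite H.
by case/orP: hk => ->; rewrite !orbT.
Qed.

Lemma same_newP (f : nat -> bool) s x : f x -> [|| f x, x == s | x == s.-1].
Proof. by move=> ->. Qed.

Local Open Scope ring_scope.
Lemma C1 : C 1 = 0. Proof. by rewrite C_rec C0 /Gv /Gof /=; field. Qed.
Lemma T1 : T 1 = 1. Proof. by []. Qed.
Lemma T_rec k : (1 <= k)%N -> T k.+1 = (T k + Gv k) / 2.
Proof. by case: k. Qed.
Lemma G1 : Gv 1 = 1. Proof. by []. Qed.
Lemma G2 : Gv 2 = 1. Proof. by []. Qed.
Local Close Scope ring_scope.

Lemma step_down n occ tk p bp xs l r nf ys k :
  Good n occ tk p bp (Chain xs l r false nf ys) -> sz (Chain xs l r false nf ys) = k.+1 ->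
  StepOK n occ tk p bp (Chain xs l r false nf ys) k.
Proof.
move=> [Hw Hp Ho Hg [Hin [Hbp Hpe Htr Htl]]] Hsz.
have [W1 [W2 W3]] := Wlr Hw.
have Hs : nextS n occ p bp = r.
  apply: nextS_S2.
  - rewrite Hbp Hpe /leftS; case: (r =P n) => [->|rn] //=; case: eqP => //; slia.
  - apply: (occ_in Ho); [slia | apply: has_lr; slia].
have T2 : (2 <= r)%N by slia.
rewrite /StepOK Hs !(tnE _ _ _ T2) /=; clear Hs.
have [Orr Orr'] := occ_rS Hw Hp Ho.
have [Oll Oll'] := occ_lS Hw Hp Ho.
case: (ltnP l r) => hlr.
- have Hr1 : tk r.-1 = false by apply: Hin; slia.
  rewrite Hr1 Htr negbK /=.
  exists (Chain xs l r.-1 false nf ys), (NoChain (xs ++ (l, r.-1) :: ys)).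
  split.
  + case: (nf) Htr => Htr /=.
    * apply: (good_replace Hw Hp Ho Hg _ _ _ (midR hlr)) => //.
      - slia.
      - move=> j; exact: upd_mono.
      - move=> j; apply: upd_newP; by rewrite eqxx.
      - by move=> a ha; left.
      - split.
          move=> j hj; rewrite updE Hin; last slia.
          by have -> : (j == r) = false by slia.
        split => //.
        + by case: eqP => h; slia.
        + by rewrite updE Hr1; case: eqP => //; slia.
        + exact: upd_mono.
    * apply: (good_replace Hw Hp Ho Hg _ _ _ (midR hlr)) => //.
      - slia.
      - move=> j; exact: upd_mono.
      - move=> j; apply: upd_newP; by rewrite eqxx orbT.
      - by move=> a ha; left.
      - split.
          move=> j hj; rewrite updE Hin; last slia.
          by have -> : (j == r.-1) = false by slia.
        split => //.
        + by case: eqP => h; slia.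
        + by rewrite updE eqxx.
        + exact: upd_mono.
  + by apply: (sz_replace _ _ (midR hlr) Hsz).
  + apply: (good_replace Hw Hp Ho Hg _ _ _ (midR hlr)) => //.
    * slia.
    * move=> j; exact: upd_mono.
    * move=> j; apply: upd_newP; by rewrite eqxx orbT.
    * move=> a; rewrite /gapsof !mem_cat in_cons => /or3P [ha|/eqP ->|ha].
      - by left; rewrite ha.
      - right; split => /=.
        + exact: upd_mono.
        + by rewrite updE eqxx.
        + move=> j hj; rewrite updE Hin; last slia.
          by have -> : (j == r.-1) = false by slia.
      - by left; rewrite ha orbT.
    * exact: upd_mono.
  + by apply: (sz_replace _ _ (midR hlr) Hsz).
  + rewrite /val /= !big_cat /= !big_cons /=.
    have e : (r.+1 - l = (r.-1.+1 - l).+1)%N by slia.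
    have e1 : (1 <= r.-1.+1 - l)%N by slia.
    case: (nf) => /=; rewrite e ?C_rec ?(T_rec e1) /len /=; by field.
- have e : r = l by slia.
  subst r.
  rewrite Htr Htl /=.
  exists (NoChain (xs ++ ys)), (NoChain (xs ++ ys)).
  case: (nf) Htr => Htr /=.
  + split.
    * apply: (good_replace Hw Hp Ho Hg _ _ _ (mid0 l)) => //.
      - slia.
      - move=> j; exact: upd_mono.
      - move=> j; apply: upd_newP; by rewrite eqxx.
      - by move=> a ha; left.
      - exact: upd_mono.
    * by apply: (sz_replace _ _ (mid0 l) Hsz).
    * apply: (good_replace Hw Hp Ho Hg _ _ _ (mid0 l)) => //.
      - slia.
      - move=> j; exact: upd_mono.
      - move=> j; apply: upd_newP; by rewrite eqxx.
      - by move=> a ha; left.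
      - exact: upd_mono.
    * by apply: (sz_replace _ _ (mid0 l) Hsz).
    * rewrite /val /= !big_cat /= subSnn C1; by field.
  + split.
    * apply: (good_replace Hw Hp Ho Hg _ _ _ (mid0 l)) => //.
      - slia.
      - move=> j; exact: same_newP.
      - by move=> a ha; left.
      - exact: upd_mono.
    * by apply: (sz_replace _ _ (mid0 l) Hsz).
    * apply: (good_replace Hw Hp Ho Hg _ _ _ (mid0 l)) => //.
      - slia.
      - move=> j; exact: same_newP.
      - by move=> a ha; left.
      - exact: upd_mono.
    * by apply: (sz_replace _ _ (mid0 l) Hsz).
    * rewrite /val /= !big_cat /= subSnn T1; by field.
Qed.

Lemma step_up n occ tk p bp xs l r nf ys k :
  Good n occ tk p bp (Chain xs l r true nf ys) -> sz (Chain xs l r true nf ys) = k.+1 ->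
  StepOK n occ tk p bp (Chain xs l r true nf ys) k.
Proof.
move=> [Hw Hp Ho Hg [Hin [Hbp Hpe Htl Htr]]] Hsz.
have [W1 [W2 W3]] := Wlr Hw.
have Hs : nextS n occ p bp = l.
  apply: nextS_S2.
  - rewrite Hbp Hpe /rightS; case: eqP => h; slia.
  - apply: (occ_in Ho); [slia | apply: has_lr; slia].
have T2 : (2 <= l)%N by slia.
rewrite /StepOK Hs !(tnE _ _ _ T2) /=; clear Hs.
have [Orr Orr'] := occ_rS Hw Hp Ho.
have [Oll Oll'] := occ_lS Hw Hp Ho.
case: (ltnP l r) => hlr.
- have Hl1 : tk l = false by apply: Hin; slia.
  rewrite Hl1 Htl negbK /=.
  exists (NoChain (xs ++ (l.+1, r) :: ys)), (Chain xs l.+1 r true nf ys).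
  split.
  + apply: (good_replace Hw Hp Ho Hg _ _ _ (midL hlr)) => //.
    * slia.
    * move=> j; exact: upd_mono.
    * move=> j; apply: upd_newP; by rewrite eqxx.
    * move=> a; rewrite /gapsof !mem_cat in_cons => /or3P [ha|/eqP ->|ha].
      - by left; rewrite ha.
      - right; split => /=.
        + by rewrite updE eqxx.
        + exact: upd_mono.
        + move=> j hj; rewrite updE Hin; last slia.
          by have -> : (j == l) = false by slia.
      - by left; rewrite ha orbT.
    * exact: upd_mono.
  + by apply: (sz_replace _ _ (midL hlr) Hsz).
  + case: (nf) Htl => Htl /=.
    * apply: (good_replace Hw Hp Ho Hg _ _ _ (midL hlr)) => //.
      - slia.
      - move=> j; exact: upd_mono.
      - move=> j; apply: upd_newP; by rewrite eqxx orbT.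
      - by move=> a ha; left.
      - split.
          move=> j hj; rewrite updE Hin; last slia.
          by have -> : (j == l.-1) = false by slia.
        split => //.
        + by rewrite updE Hl1; case: eqP => //; slia.
        + exact: upd_mono.
    * apply: (good_replace Hw Hp Ho Hg _ _ _ (midL hlr)) => //.
      - slia.
      - move=> j; exact: upd_mono.
      - move=> j; apply: upd_newP; by rewrite eqxx.
      - by move=> a ha; left.
      - split.
          move=> j hj; rewrite updE Hin; last slia.
          by have -> : (j == l) = false by slia.
        split => //.
        + by rewrite updE eqxx.
        + exact: upd_mono.
  + by apply: (sz_replace _ _ (midL hlr) Hsz).
  + rewrite /val /= !big_cat /= !big_cons /=.
    have e : (r.+1 - l = (r.+1 - l.+1).+1)%N by slia.
    have e1 : (1 <= r.+1 - l.+1)%N by slia.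
    case: (nf) => /=; rewrite e ?C_rec ?(T_rec e1) /len /=; by field.
- have e : r = l by slia.
  subst r.
  rewrite Htr Htl /=.
  exists (NoChain (xs ++ ys)), (NoChain (xs ++ ys)).
  case: (nf) Htl => Htl /=.
  + split.
    * apply: (good_replace Hw Hp Ho Hg _ _ _ (mid0 l)) => //.
      - slia.
      - move=> j; exact: upd_mono.
      - move=> j; apply: upd_newP; by rewrite eqxx orbT.
      - by move=> a ha; left.
      - exact: upd_mono.
    * by apply: (sz_replace _ _ (mid0 l) Hsz).
    * apply: (good_replace Hw Hp Ho Hg _ _ _ (mid0 l)) => //.
      - slia.
      - move=> j; exact: upd_mono.
      - move=> j; apply: upd_newP; by rewrite eqxx orbT.
      - by move=> a ha; left.
      - exact: upd_mono.
    * by apply: (sz_replace _ _ (mid0 l) Hsz).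
    * rewrite /val /= !big_cat /= subSnn C1; by field.
  + split.
    * apply: (good_replace Hw Hp Ho Hg _ _ _ (mid0 l)) => //.
      - slia.
      - move=> j; exact: same_newP.
      - by move=> a ha; left.
      - exact: upd_mono.
    * by apply: (sz_replace _ _ (mid0 l) Hsz).
    * apply: (good_replace Hw Hp Ho Hg _ _ _ (mid0 l)) => //.
      - slia.
      - move=> j; exact: same_newP.
      - by move=> a ha; left.
      - exact: upd_mono.
    * by apply: (sz_replace _ _ (mid0 l) Hsz).
    * rewrite /val /= !big_cat /= subSnn T1; by field.
Qed.

Lemma step_nochain n occ tk p bp gs k :
  Good n occ tk p bp (NoChain gs) -> sz (NoChain gs) = k.+1 ->
  StepOK n occ tk p bp (NoChain gs) k.
Proof.
case: gs => [|[l r] gs]; first by move=> _; rewrite /sz big_nil.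
move=> [Hw Hp Ho Hg Hlink] Hsz.
have Hw' : all (wf n) ([::] ++ (l, r) :: gs) by [].
have Hp' : pairwise sep ([::] ++ (l, r) :: gs) by [].
have Hg' : forall a, a \in [::] ++ gs -> gapok tk a.
  by move=> a ha; apply: Hg; rewrite in_cons ha orbT.
have [Gl Gr Gin] := Hg (l, r) (mem_head _ _).
rewrite /= in Gl Gr Gin.
have [W1 [W2 W3]] := Wlr Hw'.
have Hs : nextS n occ p bp = (l + uphalf (r.+1 - l) - 1)%N.
  have [F1 F2] := S3_find Hw Hp Ho.
  rewrite /nextS /=; move: Hlink => /= ->; by rewrite /= F1 F2.
remember (l + uphalf (r.+1 - l) - 1)%N as s eqn:Es.
have T2 : (2 <= s)%N by slia.
rewrite /StepOK Hs !(tnE _ _ _ T2) /=; clear Hs.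
have [Orr Orr'] := occ_rS Hw' Hp' Ho.
have [Oll Oll'] := occ_lS Hw' Hp' Ho.
have [e1|[e2|e3]] : r = l \/ r = l.+1 \/ (l.+1 < r)%N by slia.
- subst r. have es : s = l by rewrite Es; slia.
  clear Es; subst s.
  rewrite Gl Gr /=.
  exists (NoChain gs), (NoChain gs).
  split.
  + apply: (good_replace Hw' Hp' Ho Hg' _ _ _ (mid0 l)) => //.
    * slia.
    * move=> j; exact: same_newP.
    * by move=> a ha; left.
    * exact: upd_mono.
  + by apply: (sz_replace (xs := [::]) _ _ (mid0 l) Hsz).
  + apply: (good_replace Hw' Hp' Ho Hg' _ _ _ (mid0 l)) => //.
    * slia.
    * move=> j; exact: same_newP.
    * by move=> a ha; left.
    * exact: upd_mono.
  + by apply: (sz_replace (xs := [::]) _ _ (mid0 l) Hsz).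
  + rewrite /val /= !big_cons /len /= subSnn G1; by field.
- subst r. have es : s = l by rewrite Es; slia.
  clear Es; subst s.
  have Hl0 : tk l = false by apply: Gin; slia.
  rewrite Gl Hl0 /=.
  have hlr : (l < l.+1)%N by [].
  exists (NoChain ((l.+1, l.+1) :: gs)), (Chain [::] l.+1 l.+1 true false gs).
  split.
  + apply: (good_replace Hw' Hp' Ho Hg' _ _ _ (midL hlr)) => //.
    * slia.
    * move=> j; exact: upd_mono.
    * move=> j; apply: upd_newP; by rewrite eqxx.
    * move=> a; rewrite /gapsof in_cons => /orP [/eqP ->|ha].
      - right; split => /=.
        + by rewrite updE eqxx.
        + exact: upd_mono.
        + move=> j hj; slia.
      - by left.
    * exact: upd_mono.
  + by apply: (sz_replace (xs := [::]) _ _ (midL hlr) Hsz).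
  + apply: (good_replace Hw' Hp' Ho Hg' _ _ _ (midL hlr)) => //.
    * slia.
    * move=> j; exact: upd_mono.
    * move=> j; apply: upd_newP; by rewrite eqxx.
    * by move=> a ha; left.
    * split; first by move=> j hj; slia.
      split => //.
      - by rewrite updE eqxx.
      - exact: upd_mono.
  + by apply: (sz_replace (xs := [::]) _ _ (midL hlr) Hsz).
  + rewrite /val /= !big_cons /len /=.
    have -> : (l.+2 - l = 2)%N by slia.
    have -> : (l.+2 - l.+1 = 1)%N by slia.
    rewrite G1 G2 T1; by field.
- have hls : (l < s < r)%N by rewrite Es; slia.
  have Hs0 : tk s = false by apply: Gin; slia.
  have Hs1 : tk s.-1 = false by apply: Gin; slia.
  rewrite Hs0 Hs1 /=.
  exists (Chain [::] l s.-1 false true ((s.+1, r) :: gs)), (Chain [:: (l, s.-1)] s.+1 r true true gs).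
  split.
  + apply: (good_replace Hw' Hp' Ho Hg' _ _ _ (midS hls)) => //.
    * slia.
    * move=> j; exact: upd_mono.
    * move=> j; apply: upd_newP; by rewrite eqxx.
    * move=> a; rewrite /gapsof /= in_cons => /orP [/eqP ->|ha].
      - right; split => /=.
        + by rewrite updE eqxx.
        + exact: upd_mono.
        + move=> j hj; rewrite updE Gin; last slia.
          by have -> : (j == s) = false by slia.
      - by left.
    * split.
        move=> j hj; rewrite updE Gin; last slia.
        by have -> : (j == s) = false by slia.
      split => //.
      - by case: eqP => h; slia.
      - by rewrite updE Hs1; case: eqP => //; slia.
      - exact: upd_mono.
  + by apply: (sz_replace (xs := [::]) _ _ (midS hls) Hsz).
  + apply: (good_replace Hw' Hp' Ho Hg' _ _ _ (midS hls)) => //.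
    * slia.
    * move=> j; exact: upd_mono.
    * move=> j; apply: upd_newP; by rewrite eqxx orbT.
    * move=> a; rewrite /gapsof /= in_cons => /orP [/eqP ->|ha].
      - right; split => /=.
        + exact: upd_mono.
        + by rewrite updE eqxx.
        + move=> j hj; rewrite updE Gin; last slia.
          by have -> : (j == s.-1) = false by slia.
      - by left.
    * split.
        move=> j hj; rewrite updE Gin; last slia.
        by have -> : (j == s.-1) = false by slia.
      split => //.
      - by rewrite updE Hs0; case: eqP => //; slia.
      - exact: upd_mono.
  + by apply: (sz_replace (xs := [::]) _ _ (midS hls) Hsz).
  + rewrite /val /= !big_cons /len /=.
    have g3 : (3 <= r.+1 - l)%N by slia.
    rewrite (Gv_rec _ g3).
    have -> : (s.-1.+1 - l = (uphalf (r.+1 - l)).-1)%N by rewrite Es; slia.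
    have -> : (r.+1 - s.+1 = r.+1 - l - uphalf (r.+1 - l))%N by rewrite Es; slia.
    by field.
Qed.
Local Open Scope ring_scope.

Lemma avgS k F : avg k.+1 F = (avg k (fun t => F (true :: t)) + avg k (fun t => F (false :: t))) / 2.
Proof. by []. Qed.

Lemma eq_avg k (F G : seq bool -> rat) : F =1 G -> avg k F = avg k G.
Proof.
elim: k F G => [|k IH] F G H /=; first exact: H.
by rewrite (IH _ (fun t => G (true :: t))) ?(IH (fun t => F (false :: t)) (fun t => G (false :: t))).
Qed.

Lemma len_pos n a : wf n a -> (0 < len a)%N.
Proof. by rewrite /wf /len; slia. Qed.

Lemma sz0_ivs n D : all (wf n) (ivs D) -> sz D = 0%N -> ivs D = [::].
Proof.
rewrite /sz; case: (ivs D) => [|a s] //= /andP [Wa _].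
rewrite big_cons; have := len_pos Wa; slia.
Qed.

Lemma main_avg n k : forall D occ tk p bp, Good n occ tk p bp D -> sz D = k ->
  avg k (fun t => ((runS n t occ tk p bp)%:R : rat)) = val D.
Proof.
elim: k => [|k IH] D occ tk p bp HG Hsz.
  have [Hw _ _ _ _] := HG.
  have E := sz0_ivs Hw Hsz.
  case: D HG Hsz Hw E => [gs|xs l r up nf ys] HG Hsz Hw E /=.
  - by move: E => /= ->; rewrite /val /= big_nil addr0.
  - by move: E => /=; case: xs {HG Hsz Hw}.
have [D1 [D0 [G1 s1 G0 s0 V]]] : StepOK n occ tk p bp D k.
  case: D HG Hsz => [gs|xs l r [] nf ys] HG Hsz.
  - exact: step_nochain.
  - exact: step_up.
  - exact: step_down.
have Eb : forall b, avg k (fun t => ((runS n (b :: t) occ tk p bp)%:R : rat)) =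
   ((take_napkin n tk (nextS n occ p bp) b).2)%:R +
   avg k (fun t => ((runS n t (upd occ (nextS n occ p bp)) (take_napkin n tk (nextS n occ p bp) b).1
      (nextS n occ p bp) b)%:R : rat)).
  by move=> b; rewrite -avg_addc; apply: eq_avg => t /=; rewrite natrD.
rewrite /= V !Eb.
by rewrite (IH _ _ _ _ _ G1 s1) (IH _ _ _ _ _ G0 s0).
Qed.

Lemma ES_C n : (1 <= n)%N -> ES n = C n.-1.
Proof.
case: n => [|n] // _.
rewrite /ES (sum_tuple_avg n.+1 (fun s => ((nuS n.+1 s)%:R : rat))) mulrC mulrA mulVf ?mul1r; last by rewrite pnatr_eq0 expn_eq0.
have Eb : forall b, avg n (fun t => ((nuS n.+1 (b :: t))%:R : rat)) =
   (0%N)%:R + avg n (fun t => ((runS n.+1 t (upd (fun _ => false) 1)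
       (take_napkin n.+1 (fun _ => false) 1 b).1 1 b)%:R : rat)).
  move=> b; rewrite -avg_addc; apply: eq_avg => t; rewrite /nuS natrD add0r.
  by rewrite add0r.
have -> : avg n.+1 (fun s => ((nuS n.+1 s)%:R : rat)) = (avg n (fun t => ((nuS n.+1 (true :: t))%:R : rat)) + avg n (fun t => ((nuS n.+1 (false :: t))%:R : rat))) / 2 by [].
rewrite (Eb true) (Eb false).
case: n Eb => [|n] _.
  have GD : forall b, Good 1 (upd (fun _ => false) 1) (take_napkin 1 (fun _ => false) 1 b).1 1 b (NoChain [::]).
    move=> b; split => //=.
    - move=> x hx; have -> : x = 1%N by slia.
      by rewrite updE eqxx.
    - by case: b.
  have S0 : sz (NoChain [::]) = 0%N by rewrite /sz big_nil.
  rewrite (main_avg (GD true) S0) (main_avg (GD false) S0).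
  rewrite /val /= big_nil ?C0; by field.
have GD : forall b, Good n.+2 (upd (fun _ => false) 1) (take_napkin n.+2 (fun _ => false) 1 b).1 1 b
    (Chain [::] 2 n.+2 (~~ b) true [::]).
  move=> b; split.
  - rewrite /= /wf /=; slia.
  - by [].
  - move=> x hx; rewrite /= updE /inI /= orbF; case: eqP => h; slia.
  - by move=> a; rewrite in_nil.
  - case: b => /=; rewrite /take_napkin /= /leftS /=.
    + split; first by move=> j hj; rewrite updE; case: eqP => h; slia.
      split => //; by rewrite eqxx.
    + split; first by move=> j hj; rewrite updE; case: eqP => h; slia.
      split => //; rewrite updE ?eqxx //; case: eqP => h; slia.
have S : forall b : bool, sz (Chain [::] 2 n.+2 b true [::]) = n.+1.
  by move=> b; rewrite /sz /= big_cons big_nil /len /=; slia.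
rewrite (main_avg (GD true) (S _)) (main_avg (GD false) (S _)).
rewrite /val /= big_nil; by field.
Qed.
Local Open Scope ring_scope.
Theorem proposition5 :
  [/\ ES 1 = 0, ES 2 = 0, ES 3 = 1 / 2, ES 4 = 3 / 4 &
      forall n : nat, (5 <= n)%N ->
        ES n = 1 / 2 * (ES n.-1 + ES (n.+1)./2 + ES (uphalf n.+1))].
Proof.
have C1 : C 1 = 0 by rewrite C_rec C0 /Gv /Gof /=; field.
have C2 : C 2 = 1/2 by rewrite C_rec C1 /Gv /Gof /=; field.
have C3 : C 3 = 3/4 by rewrite C_rec C2 /Gv /Gof /=; field.
split; try by rewrite ES_C.
move=> n n5.
rewrite !ES_C; try lia.
have -> : n.-1 = (n - 2).+1 by lia.
rewrite C_rec /Gv /Gof.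
have -> : (n - 2 == 0)%N = false by lia.
have -> : (n - 2 <= 2)%N = false by lia.
rewrite -/Gv.
have -> : (n.+1./2).-1 = (n - 2).+1./2 by lia.
have -> : (uphalf n.+1).-1 = uphalf (n - 2).+1 by lia.
have -> : (n - 2).+1.-1 = (n - 2)%N by [].
by field.
Qed.
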